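(* Let $\mathcal K$ be a 2-category which admits Eilenberg–Moore constructions for both monads and comonads and in which idempotent 2-cells split. Let $(t,\mu,\eta)$ be a monad and $(c,\delta,\varepsilon)$ a comonad on a 0-cell $k$, and $\psi:tc\Rightarrow ct$ a 2-cell. The following are equivalent: (i) $(t,c,\psi)$ is a weak entwining structure, i.e. $\psi\ast\mu c=c\mu\ast\psi t\ast t\psi$, $\delta t\ast\psi=c\psi\ast\psi c\ast t\delta$, $\psi\ast\eta c=c\varepsilon t\ast c\psi\ast c\eta c\ast\delta$ and $\varepsilon t\ast\psi=\mu\ast t\varepsilon t\ast t\psi\ast t\eta c$; (ii) $\psi$ induces both a weak $\iota$-lifting of the comonad $c$ for the monad $t$ and a weak $\pi$-lifting of the monad $t$ for the comonad $c$; that is, both of the following hold: (A) $c\mu\ast\psi t\ast t\psi=\psi\ast\mu c$, $\delta t\ast\psi=cc\mu\ast c\psi t\ast\psi ct\ast t\delta t\ast t\psi\ast t\eta c$ and $\varepsilon t\ast\psi=\mu\ast t\varepsilon t\ast t\psi\ast t\eta c$ (i.e. $((c,\psi),\delta,\varepsilon)$ is a comonad in $\mathrm{Mnd}^\iota(\mathcal K)$); (B) $\delta t\ast\psi=c\psi\ast\psi c\ast t\delta$, $\psi\ast\mu c=c\varepsilon t\ast c\psi\ast c\mu c\ast\psi tc\ast t\psi c\ast tt\delta$ and $\psi\ast\eta c=c\varepsilon t\ast c\psi\ast c\eta c\ast\delta$ (i.e. $((t,\psi),\mu,\eta)$ is a monad in the vertical opposite of $\mathrm{Mnd}^\iota$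 of the vertically-opposite 2-category $\mathcal K_*$).
   Context: Conventions in a 2-category $\mathcal K$: horizontal composition and whiskering by juxtaposition in the order of functor composition; identity 1-cell of $k$ written $k$, identity 2-cell of $V$ written $V$; vertical composition $\ast$ with $\alpha\ast\beta$ meaning $\beta$ then $\alpha$. Monad $(t,\mu,\eta)$: $\mu:tt\Rightarrow t$, $\eta:k\Rightarrow t$ associative and unital. Comonad $(c,\delta,\varepsilon)$: $\delta:c\Rightarrow cc$, $\varepsilon:c\Rightarrow k$, coassociative and counital. $\mathcal K$ admitting Eilenberg–Moore constructions for monads (resp. comonads) means the inclusion of $\mathcal K$ into the Lack–Street 2-category of monads (resp. of comonads) has a right 2-adjoint; idempotent 2-cells split means every idempotent 2-cell factors as $\iota\ast\pi$ with $\pi\ast\iota$ an identity. $\mathrm{Mnd}^\iota(\mathcal K)$: 0-cells monads; 1-cells $(V,\psi):t\to t'$ with $\psi:t'V\Rightarrow Vt$, $V\mu\ast\psi t\ast t'\psi=\psi\ast\mu'V$; 2-cells $\omega:(V,\psi)\Rightarrow(W,\phi)$ are $\omega:V\Rightarrow W$ with $\omega t\ast\psi=W\mu\ast\phi t\ast t'\omega t\ast t'\psi\ast t'\eta'V$; compositions as in $\mathcal K$, 1-cell composite $(V'V,V'\psi\ast\psi'V)$. *)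

(* Defs.v *)
Definition tr2 {H : Type} (C : H -> H -> Type) {f f' g g' : H}
  (ef : f = f') (eg : g = g') (x : C f g) : C f' g' :=
  match ef in _ = f1, eg in _ = g1 return C f1 g1 with eq_refl, eq_refl => x end.

Record TwoCatData := {
  ob : Type;
  hom : ob -> ob -> Type;
  cell : forall a b, hom a b -> hom a b -> Type;
  id1 : forall a, hom a a;
  (* comp1 g f = "g f" : first f then g (order of functor composition) *)
  comp1 : forall a b c, hom b c -> hom a b -> hom a c;
  id2 : forall a b (f : hom a b), cell a b f f;
  (* vcomp α β = α * β : first β, then α *)
  vcomp : forall a b (f g h : hom a b), cell a b g h -> cell a b f g -> cell a b f h;
  hcomp : forall a b c (f f' : hom b c) (g g' : hom a b),
      cell b c f f' -> cell a b g g' -> cell a c (comp1 a b c f g) (comp1 a b c f' g') }.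

Arguments hom {_} _ _.
Arguments cell {_ _ _} _ _.
Arguments id1 {_} _.
Arguments comp1 {_ _ _ _} _ _.
Arguments id2 {_ _ _} _.
Arguments vcomp {_ _ _ _ _ _} _ _.
Arguments hcomp {_ _ _ _ _ _ _ _} _ _.

Notation "g ⊚ f" := (comp1 g f) (at level 39, right associativity).
Notation "α ⋆ β" := (vcomp α β) (at level 51, right associativity).

Record IsTwoCat (D : TwoCatData) : Prop := {
  comp1A : forall (a b c d : ob D) (f : hom c d) (g : hom b c) (h : hom a b),
      f ⊚ (g ⊚ h) = (f ⊚ g) ⊚ h;
  comp1_idl : forall (a b : ob D) (f : hom a b), id1 b ⊚ f = f;
  comp1_idr : forall (a b : ob D) (f : hom a b), f ⊚ id1 a = f;
  vcompA : forall (a b : ob D) (f g h i : hom a b)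
      (α : cell h i) (β : cell g h) (γ : cell f g), α ⋆ (β ⋆ γ) = (α ⋆ β) ⋆ γ;
  vcomp_idl : forall (a b : ob D) (f g : hom a b) (α : cell f g), id2 g ⋆ α = α;
  vcomp_idr : forall (a b : ob D) (f g : hom a b) (α : cell f g), α ⋆ id2 f = α;
  hcomp_id : forall (a b c : ob D) (f : hom b c) (g : hom a b),
      hcomp (id2 f) (id2 g) = id2 (f ⊚ g);
  interchange : forall (a b c : ob D) (f f' f'' : hom b c) (g g' g'' : hom a b)
      (α : cell f' f'') (β : cell f f') (γ : cell g' g'') (δ : cell g g'),
      hcomp (α ⋆ β) (γ ⋆ δ) = hcomp α γ ⋆ hcomp β δ;
  hcompA : forall (a b c d : ob D) (f f' : hom c d) (g g' : hom b c) (h h' : hom a b)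
      (α : cell f f') (β : cell g g') (γ : cell h h'),
      tr2 (@cell D a d) (comp1A a b c d f g h) (comp1A a b c d f' g' h')
          (hcomp α (hcomp β γ)) = hcomp (hcomp α β) γ;
  hcomp_idl : forall (a b : ob D) (f f' : hom a b) (α : cell f f'),
      tr2 (@cell D a b) (comp1_idl a b f) (comp1_idl a b f') (hcomp (id2 (id1 b)) α) = α;
  hcomp_idr : forall (a b : ob D) (f f' : hom a b) (α : cell f f'),
      tr2 (@cell D a b) (comp1_idr a b f) (comp1_idr a b f') (hcomp α (id2 (id1 a))) = α }.

Record TwoCat := { tc_data :> TwoCatData; tc_ax : IsTwoCat tc_data }.

Section Whiskering.
Context {K : TwoCat}.

Definition c1A {a b c d : ob K} (f : hom c d) (g : hom b c) (h : hom a b) :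
  f ⊚ (g ⊚ h) = (f ⊚ g) ⊚ h := comp1A _ (tc_ax K) a b c d f g h.
Definition c1l {a b : ob K} (f : hom a b) : id1 b ⊚ f = f := comp1_idl _ (tc_ax K) a b f.
Definition c1r {a b : ob K} (f : hom a b) : f ⊚ id1 a = f := comp1_idr _ (tc_ax K) a b f.

Definition lw {a b d : ob K} (f : hom b d) {g h : hom a b} (α : cell g h)
  : cell (f ⊚ g) (f ⊚ h) := hcomp (id2 f) α.
Definition rw {a b d : ob K} {g h : hom b d} (α : cell g h) (f : hom a b)
  : cell (g ⊚ f) (h ⊚ f) := hcomp α (id2 f).

Definition rwA {a b d e : ob K} {f f' : hom d e} {g g' : hom b d}
  (α : cell (f ⊚ g) (f' ⊚ g')) (h : hom a b) : cell (f ⊚ (g ⊚ h)) (f' ⊚ (g' ⊚ h)) :=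
  tr2 cell (eq_sym (c1A f g h)) (eq_sym (c1A f' g' h)) (rw α h).
Definition rwAs {a b d e : ob K} {f : hom d e} {g : hom b d} {x : hom b e}
  (α : cell (f ⊚ g) x) (h : hom a b) : cell (f ⊚ (g ⊚ h)) (x ⊚ h) :=
  tr2 cell (eq_sym (c1A f g h)) eq_refl (rw α h).
Definition rwAt {a b d e : ob K} {f : hom d e} {g : hom b d} {x : hom b e}
  (α : cell x (f ⊚ g)) (h : hom a b) : cell (x ⊚ h) (f ⊚ (g ⊚ h)) :=
  tr2 cell eq_refl (eq_sym (c1A f g h)) (rw α h).
Definition rwIs {a b : ob K} {x : hom b b} (α : cell (id1 b) x) (h : hom a b)
  : cell h (x ⊚ h) := tr2 cell (c1l h) eq_refl (rw α h).
Definition rwIt {a b : ob K} {x : hom b b} (α : cell x (id1 b)) (h : hom a b)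
  : cell (x ⊚ h) h := tr2 cell eq_refl (c1l h) (rw α h).
Definition lwIs {a b : ob K} (f : hom a b) {x : hom a a} (α : cell (id1 a) x)
  : cell f (f ⊚ x) := tr2 cell (c1r f) eq_refl (lw f α).
Definition lwIt {a b : ob K} (f : hom a b) {x : hom a a} (α : cell x (id1 a))
  : cell (f ⊚ x) f := tr2 cell eq_refl (c1r f) (lw f α).

Definition is_monad {k : ob K} (t : hom k k) (mu : cell (t ⊚ t) t) (eta : cell (id1 k) t)
  : Prop :=
  mu ⋆ rwAs mu t = mu ⋆ lw t mu /\
  mu ⋆ rwIs eta t = id2 t /\ mu ⋆ lwIs t eta = id2 t.

Definition is_comonad {k : ob K} (c : hom k k) (delta : cell c (c ⊚ c))
  (eps : cell c (id1 k)) : Prop :=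
  rwAt delta c ⋆ delta = lw c delta ⋆ delta /\
  rwIt eps c ⋆ delta = id2 c /\ lwIt c eps ⋆ delta = id2 c.

(** Algebras / coalgebras with domain X (= 1-cells (X,1) -> (k,t) of the
    Lack–Street 2-category of monads, resp. comonads) and their morphisms
    (= 2-cells there). *)
Definition is_alg {k X : ob K} (t : hom k k) (mu : cell (t ⊚ t) t) (eta : cell (id1 k) t)
  (V : hom X k) (a : cell (t ⊚ V) V) : Prop :=
  a ⋆ rwIs eta V = id2 V /\ a ⋆ rwAs mu V = a ⋆ lw t a.

Definition is_alg_mor {k X : ob K} (t : hom k k) (V W : hom X k)
  (a : cell (t ⊚ V) V) (b : cell (t ⊚ W) W) (ω : cell V W) : Prop :=
  ω ⋆ a = b ⋆ lw t ω.

Definition is_coalg {k X : ob K} (c : hom k k) (delta : cell c (c ⊚ c))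
  (eps : cell c (id1 k)) (V : hom X k) (g : cell V (c ⊚ V)) : Prop :=
  rwIt eps V ⋆ g = id2 V /\ rwAt delta V ⋆ g = lw c g ⋆ g.

Definition is_coalg_mor {k X : ob K} (c : hom k k) (V W : hom X k)
  (g : cell V (c ⊚ V)) (g' : cell W (c ⊚ W)) (ω : cell V W) : Prop :=
  g' ⋆ ω = lw c ω ⋆ g.

(** (E, U, u) is an Eilenberg–Moore object of the monad t: for every X,
    the comparison  K(X,E) -> Alg_t(X),  F |-> (U F, u F),  θ |-> U θ,
    is an isomorphism of categories (bijective on objects, fully faithful).
    This is the pointwise form of the existence of the right 2-adjoint. *)
Definition EM_object_monad {k : ob K} (t : hom k k) (mu : cell (t ⊚ t) t)
  (eta : cell (id1 k) t) (E : ob K) (U : hom E k) (u : cell (t ⊚ U) U) : Prop :=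
  is_alg t mu eta U u /\
  forall X : ob K,
    (forall (V : hom X k) (a : cell (t ⊚ V) V), is_alg t mu eta V a ->
       exists! F : hom X E,
         existT (fun W : hom X k => cell (t ⊚ W) W) (U ⊚ F) (rwAs u F)
         = existT (fun W : hom X k => cell (t ⊚ W) W) V a) /\
    (forall F G : hom X E,
       (forall θ θ' : cell F G, lw U θ = lw U θ' -> θ = θ') /\
       (forall ω : cell (U ⊚ F) (U ⊚ G),
          is_alg_mor t (U ⊚ F) (U ⊚ G) (rwAs u F) (rwAs u G) ω ->
          exists θ : cell F G, lw U θ = ω)).

Definition EM_object_comonad {k : ob K} (c : hom k k) (delta : cell c (c ⊚ c))
  (eps : cell c (id1 k)) (E : ob K) (U : hom E k) (u : cell U (c ⊚ U)) : Prop :=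
  is_coalg c delta eps U u /\
  forall X : ob K,
    (forall (V : hom X k) (g : cell V (c ⊚ V)), is_coalg c delta eps V g ->
       exists! F : hom X E,
         existT (fun W : hom X k => cell W (c ⊚ W)) (U ⊚ F) (rwAt u F)
         = existT (fun W : hom X k => cell W (c ⊚ W)) V g) /\
    (forall F G : hom X E,
       (forall θ θ' : cell F G, lw U θ = lw U θ' -> θ = θ') /\
       (forall ω : cell (U ⊚ F) (U ⊚ G),
          is_coalg_mor c (U ⊚ F) (U ⊚ G) (rwAt u F) (rwAt u G) ω ->
          exists θ : cell F G, lw U θ = ω)).
End Whiskering.

Definition admits_EM_monads (K : TwoCat) : Prop :=
  forall (k : ob K) (t : hom k k) (mu : cell (t ⊚ t) t) (eta : cell (id1 k) t),
    is_monad t mu eta ->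
    exists (E : ob K) (U : hom E k) (u : cell (t ⊚ U) U), EM_object_monad t mu eta E U u.

Definition admits_EM_comonads (K : TwoCat) : Prop :=
  forall (k : ob K) (c : hom k k) (delta : cell c (c ⊚ c)) (eps : cell c (id1 k)),
    is_comonad c delta eps ->
    exists (E : ob K) (U : hom E k) (u : cell U (c ⊚ U)),
      EM_object_comonad c delta eps E U u.

Definition idempotent_2cells_split (K : TwoCat) : Prop :=
  forall (a b : ob K) (f : hom a b) (e : cell f f), e ⋆ e = e ->
    exists (g : hom a b) (i : cell g f) (p : cell f g), i ⋆ p = e /\ p ⋆ i = id2 g.

Section Entwining.
Context {K : TwoCat} {k : ob K} (t c : hom k k) (mu : cell (t ⊚ t) t)
  (eta : cell (id1 k) t) (delta : cell c (c ⊚ c)) (eps : cell c (id1 k))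
  (psi : cell (t ⊚ c) (c ⊚ t)).

Definition weak_entwining : Prop :=
  psi ⋆ rwAs mu c = lw c mu ⋆ rwA psi t ⋆ lw t psi /\
  rwAt delta t ⋆ psi = lw c psi ⋆ rwA psi c ⋆ lw t delta /\
  psi ⋆ rwIs eta c = lw c (rwIt eps t) ⋆ lw c psi ⋆ lw c (rwIs eta c) ⋆ delta /\
  rwIt eps t ⋆ psi = mu ⋆ lw t (rwIt eps t) ⋆ lw t psi ⋆ lw t (rwIs eta c).

Definition weak_iota_lifting : Prop :=
  lw c mu ⋆ rwA psi t ⋆ lw t psi = psi ⋆ rwAs mu c /\
  rwAt delta t ⋆ psi =
    lw c (lw c mu) ⋆ lw c (rwA psi t) ⋆ rwA psi (c ⊚ t) ⋆ lw t (rwAt delta t)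
    ⋆ lw t psi ⋆ lw t (rwIs eta c) /\
  rwIt eps t ⋆ psi = mu ⋆ lw t (rwIt eps t) ⋆ lw t psi ⋆ lw t (rwIs eta c).

Definition weak_pi_lifting : Prop :=
  rwAt delta t ⋆ psi = lw c psi ⋆ rwA psi c ⋆ lw t delta /\
  psi ⋆ rwAs mu c =
    lw c (rwIt eps t) ⋆ lw c psi ⋆ lw c (rwAs mu c) ⋆ rwA psi (t ⊚ c)
    ⋆ lw t (rwA psi c) ⋆ lw t (lw t delta) /\
  psi ⋆ rwIs eta c = lw c (rwIt eps t) ⋆ lw c psi ⋆ lw c (rwIs eta c) ⋆ delta.
End Entwining.

(* Main.v *)
Require Import Defs.
From Stdlib Require Import List ProofIrrelevance.
Import ListNotations.

Lemma tr2_refl_any {H : Type} (C : H -> H -> Type) f g (e1 : f = f) (e2 : g = g) x :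
  tr2 C e1 e2 x = x.
Proof. rewrite (proof_irrelevance _ e1 eq_refl), (proof_irrelevance _ e2 eq_refl). reflexivity. Qed.

Lemma tr2_tr2 {H : Type} (C : H -> H -> Type) f f' f'' g g' g''
  (e1 : f = f') (e2 : g = g') (e3 : f' = f'') (e4 : g' = g'') x :
  tr2 C e3 e4 (tr2 C e1 e2 x) = tr2 C (eq_trans e1 e3) (eq_trans e2 e4) x.
Proof. destruct e1, e2, e3, e4. reflexivity. Qed.

Lemma tr2_pi {H : Type} (C : H -> H -> Type) f f' g g'
  (e1 e1' : f = f') (e2 e2' : g = g') x : tr2 C e1 e2 x = tr2 C e1' e2' x.
Proof. rewrite (proof_irrelevance _ e1 e1'), (proof_irrelevance _ e2 e2'). reflexivity. Qed.

Section M.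
Variable K : TwoCat.
Variable k : ob K.
Notation G := (hom k k).

Lemma tr2_v {a b : ob K} (f f' g g' h h' : hom a b) (e1 : f = f') (e2 : g = g') (e3 : h = h')
  (x : cell g h) (y : cell f g) :
  tr2 cell e1 e3 (x ⋆ y) = tr2 cell e2 e3 x ⋆ tr2 cell e1 e2 y.
Proof. destruct e1, e2, e3. reflexivity. Qed.

Lemma tr2_id {a b : ob K} (f f' : hom a b) (e : f = f') : tr2 cell e e (id2 f) = id2 f'.
Proof. destruct e. reflexivity. Qed.

Lemma tr2_hcomp {a b d : ob K} (f f' F F' : hom b d) (g g' G' G'' : hom a b)
  (e1 : f = F) (e2 : f' = F') (e3 : g = G') (e4 : g' = G'') α β :
  hcomp (tr2 cell e1 e2 α) (tr2 cell e3 e4 β)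
  = tr2 cell (f_equal2 comp1 e1 e3) (f_equal2 comp1 e2 e4) (hcomp α β).
Proof. destruct e1, e2, e3, e4. symmetry. apply tr2_refl_any. Qed.

Fixpoint ev (w : list G) : G :=
  match w with
  | [] => id1 k
  | x :: w' => match w' with [] => x | _ => x ⊚ ev w' end
  end.

Lemma evapp u v : ev (u ++ v) = ev u ⊚ ev v.
Proof.
  induction u as [|x u IH].
  - simpl. symmetry. apply c1l.
  - destruct u as [|y u'].
    + destruct v as [|z v]. simpl. symmetry. apply c1r. reflexivity.
    + change (x ⊚ ev (y :: u' ++ v) = (x ⊚ ev (y :: u')) ⊚ ev v).
      change (ev (y :: u' ++ v)) with (ev ((y :: u') ++ v)). rewrite IH. apply c1A.
Qed.

Definition Hh (u u' v v' : list G) (α : cell (ev u) (ev u')) (β : cell (ev v) (ev v'))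
  : cell (ev (u ++ v)) (ev (u' ++ v')) :=
  tr2 cell (eq_sym (evapp u v)) (eq_sym (evapp u' v')) (hcomp α β).

Lemma H_v u u' u'' v v' v'' (α' : cell (ev u') (ev u'')) (α : cell (ev u) (ev u'))
  (β' : cell (ev v') (ev v'')) (β : cell (ev v) (ev v')) :
  Hh u u'' v v'' (α' ⋆ α) (β' ⋆ β) = Hh u' u'' v' v'' α' β' ⋆ Hh u u' v v' α β.
Proof.
  unfold Hh. rewrite (interchange _ (tc_ax K)).
  apply (tr2_v _ _ _ _ _ _ _ (eq_sym (evapp u' v'))).
Qed.

Lemma H_id u v : Hh u u v v (id2 _) (id2 _) = id2 _.
Proof. unfold Hh. rewrite (hcomp_id _ (tc_ax K)). apply tr2_id. Qed.

Lemma H_A u u' v v' w w' (α : cell (ev u) (ev u')) (β : cell (ev v) (ev v'))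
  (γ : cell (ev w) (ev w')) :
  Hh (u ++ v) (u' ++ v') w w' (Hh u u' v v' α β) γ
  = tr2 cell (f_equal ev (app_assoc u v w)) (f_equal ev (app_assoc u' v' w'))
      (Hh u u' (v ++ w) (v' ++ w') α (Hh v v' w w' β γ)).
Proof.
  unfold Hh.
  rewrite <- (tr2_refl_any cell _ _ eq_refl eq_refl γ) at 1.
  rewrite <- (tr2_refl_any cell _ _ eq_refl eq_refl α) at 2.
  rewrite !tr2_hcomp.
  rewrite <- (hcompA _ (tc_ax K)).
  rewrite !tr2_tr2. apply tr2_pi.
Qed.

Lemma H_nil_l v v' (β : cell (ev v) (ev v')) : Hh [] [] v v' (id2 (id1 k)) β = β.
Proof.
  unfold Hh. rewrite <- (hcomp_idl _ (tc_ax K) _ _ _ _ β) at 2. apply tr2_pi.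
Qed.

Lemma H_nil_r u u' (α : cell (ev u) (ev u')) :
  Hh u u' [] [] α (id2 (id1 k)) =
  tr2 cell (f_equal ev (eq_sym (app_nil_r u))) (f_equal ev (eq_sym (app_nil_r u'))) α.
Proof.
  unfold Hh. rewrite <- (hcomp_idr _ (tc_ax K) _ _ _ _ α) at 2.
  rewrite tr2_tr2. apply tr2_pi.
Qed.
End M.

From Stdlib Require Import ssreflect.

Section M2.
Variable K : TwoCat.
Variable k : ob K.
Notation G := (hom k k).
Notation ev := (ev K k).
Notation Hh := (Hh K k).

Lemma tr2_flip {H : Type} (C : H -> H -> Type) f f' g g' (e1 : f = f') (e2 : g = g')
  (x : C f' g') (y : C f g) : x = tr2 C e1 e2 y -> y = tr2 C (eq_sym e1) (eq_sym e2) x.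
Proof. destruct e1, e2. simpl. intros ->. reflexivity. Qed.

Lemma vA {a b : ob K} (f g h i : hom a b) (α : cell h i) (β : cell g h) (γ : cell f g) :
  α ⋆ (β ⋆ γ) = (α ⋆ β) ⋆ γ.
Proof. apply (vcompA _ (tc_ax K)). Qed.
Lemma vl {a b : ob K} (f g : hom a b) (α : cell f g) : id2 g ⋆ α = α.
Proof. apply (vcomp_idl _ (tc_ax K)). Qed.
Lemma vr {a b : ob K} (f g : hom a b) (α : cell f g) : α ⋆ id2 f = α.
Proof. apply (vcomp_idr _ (tc_ax K)). Qed.

Lemma stepR {a b : ob K} (f g h i : hom a b) (A : cell h i) (B : cell g h) (C : cell g i)
  (R : cell f g) : A ⋆ B = C -> A ⋆ (B ⋆ R) = C ⋆ R.
Proof. intros E. rewrite vA E. reflexivity. Qed.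

Lemma LWv h v v' v'' (β' : cell (ev v') (ev v'')) (β : cell (ev v) (ev v')) :
  Hh h h v v'' (id2 _) (β' ⋆ β) = Hh h h v' v'' (id2 _) β' ⋆ Hh h h v v' (id2 _) β.
Proof. rewrite -H_v vl. reflexivity. Qed.

Lemma RWv g u u' u'' (α' : cell (ev u') (ev u'')) (α : cell (ev u) (ev u')) :
  Hh u u'' g g (α' ⋆ α) (id2 _) = Hh u' u'' g g α' (id2 _) ⋆ Hh u u' g g α (id2 _).
Proof. rewrite -H_v vl. reflexivity. Qed.

Lemma Hsplit1 u u' v v' (α : cell (ev u) (ev u')) (β : cell (ev v) (ev v')) :
  Hh u u' v v' α β = Hh u u' v' v' α (id2 _) ⋆ Hh u u v v' (id2 _) β.
Proof. rewrite -H_v vl vr. reflexivity. Qed.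

Lemma Hsplit2 u u' v v' (α : cell (ev u) (ev u')) (β : cell (ev v) (ev v')) :
  Hh u u' v v' α β = Hh u' u' v v' (id2 _) β ⋆ Hh u u' v v α (id2 _).
Proof. rewrite -H_v vl vr. reflexivity. Qed.

Lemma LL h h' v v' (β : cell (ev v) (ev v')) :
  Hh h h (h' ++ v) (h' ++ v') (id2 _) (Hh h' h' v v' (id2 _) β)
  = tr2 cell (eq_sym (f_equal ev (app_assoc h h' v))) (eq_sym (f_equal ev (app_assoc h h' v')))
     (Hh (h ++ h') (h ++ h') v v' (id2 _) β).
Proof.
  apply tr2_flip. rewrite -H_id H_A. reflexivity.
Qed.

Lemma LR h u u' g (α : cell (ev u) (ev u')) :
  Hh h h (u ++ g) (u' ++ g) (id2 _) (Hh u u' g g α (id2 _))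
  = tr2 cell (eq_sym (f_equal ev (app_assoc h u g))) (eq_sym (f_equal ev (app_assoc h u' g)))
     (Hh (h ++ u) (h ++ u') g g (Hh h h u u' (id2 _) α) (id2 _)).
Proof. apply tr2_flip. rewrite H_A. reflexivity. Qed.

Lemma RR u u' g1 g2 (α : cell (ev u) (ev u')) :
  Hh (u ++ g1) (u' ++ g1) g2 g2 (Hh u u' g1 g1 α (id2 _)) (id2 _)
  = tr2 cell (f_equal ev (app_assoc u g1 g2)) (f_equal ev (app_assoc u' g1 g2))
     (Hh u u' (g1 ++ g2) (g1 ++ g2) α (id2 _)).
Proof. rewrite H_A H_id. reflexivity. Qed.

Lemma LLr h h' v v' (β : cell (ev v) (ev v')) :
  Hh (h ++ h') (h ++ h') v v' (id2 _) β =
  tr2 cell (f_equal ev (app_assoc h h' v)) (f_equal ev (app_assoc h h' v'))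
  (Hh h h (h' ++ v) (h' ++ v') (id2 _) (Hh h' h' v v' (id2 _) β)).
Proof. rewrite LL tr2_tr2. symmetry. apply tr2_refl_any. Qed.

Lemma LRr h u u' g (α : cell (ev u) (ev u')) :
  Hh (h ++ u) (h ++ u') g g (Hh h h u u' (id2 _) α) (id2 _) =
  tr2 cell (f_equal ev (app_assoc h u g)) (f_equal ev (app_assoc h u' g))
  (Hh h h (u ++ g) (u' ++ g) (id2 _) (Hh u u' g g α (id2 _))).
Proof. rewrite LR tr2_tr2. symmetry. apply tr2_refl_any. Qed.

Lemma RRr u u' g1 g2 (α : cell (ev u) (ev u')) :
  Hh u u' (g1 ++ g2) (g1 ++ g2) α (id2 _) =
  tr2 cell (eq_sym (f_equal ev (app_assoc u g1 g2))) (eq_sym (f_equal ev (app_assoc u' g1 g2)))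
  (Hh (u ++ g1) (u' ++ g1) g2 g2 (Hh u u' g1 g1 α (id2 _)) (id2 _)).
Proof. rewrite RR tr2_tr2. symmetry. apply tr2_refl_any. Qed.

Lemma lw_H (x : G) u u' (α : cell (ev u) (ev u')) :
  lw x α = tr2 cell (evapp K k [x] u) (evapp K k [x] u') (Hh [x] [x] u u' (id2 x) α).
Proof. unfold Hh. rewrite tr2_tr2. symmetry. apply tr2_refl_any. Qed.
End M2.

Section M3.
Variable K : TwoCat.
Variable k : ob K.
Notation ev := (ev K k).
Notation Hh := (Hh K k).
Lemma XCH u u' v v' (α : cell (ev u) (ev u')) (β : cell (ev v) (ev v')) :
  Hh u u' v' v' α (id2 _) ⋆ Hh u u v v' (id2 _) β = Hh u' u' v v' (id2 _) β ⋆ Hh u u' v v α (id2 _).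
Proof. rewrite -Hsplit1 -Hsplit2. reflexivity. Qed.
End M3.

Section M4.
Variable K : TwoCat.
Lemma stepR3 {a b : ob K} (f g h i j : hom a b) (A : cell i j) (B : cell h i) (C : cell g h)
  (X : cell g j) (R : cell f g) : A ⋆ (B ⋆ C) = X -> A ⋆ (B ⋆ (C ⋆ R)) = X ⋆ R.
Proof. intros E. rewrite (vA K _ _ _ _ B C R) (vA K _ _ _ _ A (B ⋆ C) R) E. reflexivity. Qed.
End M4.


Section A.
Variable K : TwoCat.
Variable k : ob K.
Notation G := (hom k k).
Notation ev := (ev K k).
Notation Hh := (Hh K k).

Variables (t c : G) (mu : cell (t ⊚ t) t) (eta : cell (id1 k) t)
  (delta : cell c (c ⊚ c)) (eps : cell c (id1 k)) (psi : cell (t ⊚ c) (c ⊚ t)).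

Tactic Notation "pr" open_constr(S) := first [rewrite (stepR _ _ _ _ _ _ _ _ _ S) | rewrite S]; rewrite -?vA.

Lemma A2 (E : weak_entwining t c mu eta delta eps psi) (Hm : mu ⋆ lwIs t eta = id2 t) :
  rwAt delta t ⋆ psi =
    lw c (lw c mu) ⋆ lw c (rwA psi t) ⋆ rwA psi (c ⊚ t) ⋆ lw t (rwAt delta t)
    ⋆ lw t psi ⋆ lw t (rwIs eta c).
Proof.
  destruct E as [E1 [E2 _]].
  have cv1 : rwAt delta t = Hh [c] [c;c] [t] [t] delta (id2 t) by unfold rwAt, rw, Hh; apply tr2_pi.
  have cv2 : rwA psi t = Hh [t;c] [c;t] [t] [t] psi (id2 t) by unfold rwA, rw, Hh; apply tr2_pi.
  have cv3 : rwA psi (c ⊚ t) = Hh [t;c] [c;t] [c;t] [c;t] psi (id2 (c ⊚ t)) by unfold rwA, rw, Hh; apply tr2_pi.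
  have cv4 : rwIs eta c = Hh [] [t] [c] [c] eta (id2 c) by unfold rwIs, rw, Hh; apply tr2_pi.
  have cv5 : rwA psi c = Hh [t;c] [c;t] [c] [c] psi (id2 c) by unfold rwA, rw, Hh; apply tr2_pi.
  have cv6 : rwAs mu c = Hh [t;t] [t] [c] [c] mu (id2 c) by unfold rwAs, rw, Hh; apply tr2_pi.
  have cv7 : lwIs t eta = Hh [t] [t] [] [t] (id2 t) eta by unfold lwIs, lw, Hh; apply tr2_pi.
  rewrite cv1 cv2 cv3 cv4.
  rewrite (lw_H _ _ c [t;t] [t] mu) !tr2_refl_any.
  rewrite (lw_H _ _ c [c;t;t] [c;t]) (lw_H _ _ c [t;c;t] [c;t;t]) (lw_H _ _ t [c;t] [c;c;t])
    (lw_H _ _ t [t;c] [c;t]) (lw_H _ _ t [c] [t;c]) !tr2_refl_any.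
  rewrite cv6 cv2 (lw_H _ _ c [t;t] [t] mu) (lw_H _ _ t [t;c] [c;t]) !tr2_refl_any in E1.
  rewrite cv1 cv5 (lw_H _ _ c [t;c] [c;t]) (lw_H _ _ t [c] [c;c]) !tr2_refl_any in E2.
  rewrite cv7 in Hm.
  pr (eq_sym (LWv _ _ [t] [t;c] [c;t] [c;c;t] _ _)).
  rewrite E2 (LWv _ _ [t] [t;c] [c;t;c] [c;c;t]) (LWv _ _ [t] [t;c] [t;c;c] [c;t;c]) -?vA.
  rewrite (LL _ _ [t] [c] [t;c] [c;t] psi) !tr2_refl_any.
  pr (XCH _ _ [t;c] [c;t] [t;c] [c;t] psi psi).
  rewrite (LLr _ _ [c] [t] [t;c] [c;t] psi) !tr2_refl_any.
  pr (eq_sym (LWv _ _ [c] [t;c;t] [c;t;t] [c;t] _ _)).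
  pr (eq_sym (LWv _ _ [c] [t;t;c] [t;c;t] [c;t] _ _)).
  rewrite -E1 (LWv _ _ [c] [t;t;c] [t;c] [c;t]) -?vA.
  pr (eq_sym (LWv _ _ [t] [c] [t;c] [t;c;c] _ _)).
  rewrite -(XCH _ _ [] [t] [c] [c;c] eta delta) H_nil_l.
  rewrite (LWv _ _ [t] [c] [c;c] [t;c;c]) -?vA.
  rewrite (LR _ _ [c] [t;t] [t] [c] mu) !tr2_refl_any.
  rewrite (RRr _ _ [t;c] [c;t] [t] [c] psi) !tr2_refl_any.
  rewrite (LR _ _ [t] [t;c] [c;t] [c] psi) !tr2_refl_any.
  rewrite (RRr _ _ [] [t] [c] [c] eta) !tr2_refl_any.
  rewrite (LR _ _ [t] [c] [t;c] [c]) !tr2_refl_any.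
  pr (eq_sym (RWv _ _ [c] [t;c;t] [c;t;t] [c;t] _ _)).
  pr (eq_sym (RWv _ _ [c] [t;t;c] [t;c;t] [c;t] _ _)).
  pr (eq_sym (RWv _ _ [c] [t;c] [t;t;c] [c;t] _ _)).
  rewrite (stepR3 _ _ _ _ _ _ _ _ _ _ _ (eq_sym E1)) -?vA.
  rewrite (LR _ _ [t] [] [t] [c] eta) !tr2_refl_any.
  rewrite -(RWv _ _ [c] [t] [t;t] [t]) Hm H_id vr.
  reflexivity.
Qed.

Lemma B2 (E : weak_entwining t c mu eta delta eps psi) (Hcu : lwIt c eps ⋆ delta = id2 c) :
  psi ⋆ rwAs mu c =
    lw c (rwIt eps t) ⋆ lw c psi ⋆ lw c (rwAs mu c) ⋆ rwA psi (t ⊚ c)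
    ⋆ lw t (rwA psi c) ⋆ lw t (lw t delta).
Proof.
  destruct E as [E1 [E2 _]].
  have cv1 : rwAt delta t = Hh [c] [c;c] [t] [t] delta (id2 t) by unfold rwAt, rw, Hh; apply tr2_pi.
  have cv2 : rwA psi t = Hh [t;c] [c;t] [t] [t] psi (id2 t) by unfold rwA, rw, Hh; apply tr2_pi.
  have cv3 : rwA psi (t ⊚ c) = Hh [t;c] [c;t] [t;c] [t;c] psi (id2 (t ⊚ c)) by unfold rwA, rw, Hh; apply tr2_pi.
  have cv4 : rwIt eps t = Hh [c] [] [t] [t] eps (id2 t) by unfold rwIt, rw, Hh; apply tr2_pi.
  have cv5 : rwA psi c = Hh [t;c] [c;t] [c] [c] psi (id2 c) by unfold rwA, rw, Hh; apply tr2_pi.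
  have cv6 : rwAs mu c = Hh [t;t] [t] [c] [c] mu (id2 c) by unfold rwAs, rw, Hh; apply tr2_pi.
  have cv7 : lwIt c eps = Hh [c] [c] [c] [] (id2 c) eps by unfold lwIt, lw, Hh; apply tr2_pi.
  rewrite cv3 cv4 cv5 cv6.
  rewrite (lw_H _ _ t [c] [c;c] delta) !tr2_refl_any.
  rewrite (lw_H _ _ c [c;t] [t]) (lw_H _ _ c [t;c] [c;t]) (lw_H _ _ c [t;t;c] [t;c])
    (lw_H _ _ t [t;c;c] [c;t;c]) (lw_H _ _ t [t;c] [t;c;c]) !tr2_refl_any.
  rewrite cv6 cv2 (lw_H _ _ c [t;t] [t] mu) (lw_H _ _ t [t;c] [c;t]) !tr2_refl_any in E1.
  rewrite cv1 cv5 (lw_H _ _ c [t;c] [c;t]) (lw_H _ _ t [c] [c;c]) !tr2_refl_any in E2.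
  rewrite cv7 in Hcu.
  rewrite (LR _ _ [c] [t;t] [t] [c] mu) !tr2_refl_any.
  rewrite (RRr _ _ [t;c] [c;t] [t] [c] psi) !tr2_refl_any.
  rewrite (LR _ _ [t] [t;c] [c;t] [c] psi) !tr2_refl_any.
  pr (eq_sym (RWv _ _ [c] [t;c;t] [c;t;t] [c;t] _ _)).
  pr (eq_sym (RWv _ _ [c] [t;t;c] [t;c;t] [c;t] _ _)).
  rewrite -E1 (RWv _ _ [c] [t;t;c] [t;c] [c;t]) -?vA.
  rewrite (RR _ _ [t;t] [t] [c] [c] mu) !tr2_refl_any.
  rewrite (LL _ _ [t] [t] [c] [c;c] delta) !tr2_refl_any.
  rewrite (XCH _ _ [t;t] [t] [c] [c;c] mu delta).
  rewrite (stepR3 _ _ _ _ _ _ _ _ _ _ _ (eq_sym E2)) -?vA.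
  rewrite (LR _ _ [c] [c] [] [t] eps) !tr2_refl_any.
  pr (eq_sym (RWv _ _ [t] [c] [c;c] [c] _ _)).
  rewrite Hcu H_id vl.
  reflexivity.
Qed.
End A.

Theorem proposition5p7 (K : TwoCat)
  (HEMm : admits_EM_monads K) (HEMc : admits_EM_comonads K)
  (Hsplit : idempotent_2cells_split K)
  (k : ob K) (t : hom k k) (mu : cell (t ⊚ t) t) (eta : cell (id1 k) t)
  (Ht : is_monad t mu eta)
  (c : hom k k) (delta : cell c (c ⊚ c)) (eps : cell c (id1 k))
  (Hc : is_comonad c delta eps)
  (psi : cell (t ⊚ c) (c ⊚ t)) :
  weak_entwining t c mu eta delta eps psi <->
  (weak_iota_lifting t c mu eta delta eps psi /\
   weak_pi_lifting t c mu eta delta eps psi).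
Proof.
  split.
  - intros E. have E' := E. destruct E' as [E1 [E2 [E3 E4]]].
    destruct Ht as [_ [_ Hm]]. destruct Hc as [_ [_ Hcu]].
    split; split.
    + exact (eq_sym E1).
    + split; [ exact (A2 K k t c mu eta delta eps psi E Hm) | exact E4 ].
    + exact E2.
    + split; [ exact (B2 K k t c mu eta delta eps psi E Hcu) | exact E3 ].
  - intros [[A1 [_ A3]] [B1 [_ B3]]].
    split; [ exact (eq_sym A1) | split; [ exact B1 | split; [ exact B3 | exact A3 ] ] ].
Qed.
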